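(* Let $\mu<\lambda$ be infinite cardinals with $\mu^{<\mu}=\mu$ and $\lambda$ regular. If $p,q\in\mathbb P(\lambda,\mu)$ coincide on $[\operatorname{dom}p\cap\operatorname{dom}q]^2$, then $p$ and $q$ are compatible in $\mathbb P(\lambda,\mu)$, i.e. there is $s\in\mathbb P(\lambda,\mu)$ with $p\cup q\subseteq s$.
   Context: Let $3$ denote the three-element set of symbols $\{\ge,\perp,u\}$. For a set $w$ of ordinals, $[w]^2=\{(i,j): i<j,\ i,j\in w\}$. A valuation function is a map $p:[w]^2\to 3$ (with domain $w$, written $\operatorname{dom}p$) such that: (1) if $i<j<k$ in $w$, $p(i,j)={\ge}$ and $p(j,k)={\ge}$, then $p(i,k)={\ge}$; (2) if $i<j<k$ in $w$ and $\{p(i,j),p(i,k)\}=\{\perp,\ge\}$ then $p(j,k)={\perp}$; and if $i<j<k$, $p(i,j)={\perp}$, $p(j,k)={\ge}$, then $p(i,k)={\perp}$. $\mathbb P(\lambda,\mu)$ is the set of valuation functions whose domain is a subset of $\lambda$ of cardinality less than $\mu$, ordered by reverse inclusion (so $s$ is stronger than $p$ iff $s\supseteq p$). *)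

(* Defs.v *)
(* plain Rocq types model cardinals as initial well-ordered types. *)
From Stdlib Require Import Classical FunctionalExtensionality.

Definition inj_le (A B : Type) : Prop :=
  exists f : A -> B, forall x y, f x = f y -> x = y.

Definition card_lt (A B : Type) : Prop := inj_le A B /\ ~ inj_le B A.

Definition strict_well_order {T : Type} (lt : T -> T -> Prop) : Prop :=
  (forall x, ~ lt x x) /\
  (forall x y z, lt x y -> lt y z -> lt x z) /\
  (forall x y, lt x y \/ x = y \/ lt y x) /\
  well_founded lt.

Definition is_cardinal {T : Type} (lt : T -> T -> Prop) : Prop :=
  strict_well_order lt /\ forall a : T, card_lt {b : T | lt b a} T.

Definition is_infinite (T : Type) : Prop := inj_le nat T.

Definition is_regular {T : Type} (lt : T -> T -> Prop) : Prop :=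
  forall X : T -> Prop, (forall a, exists b, X b /\ lt a b) -> inj_le T {x : T | X x}.

(* mu^{<mu} <= mu, i.e. | U_{alpha < mu} mu^alpha | <= mu
   (the reverse inequality is trivial, so this is mu^{<mu} = mu). *)
Definition pow_lt_self {M : Type} (lt : M -> M -> Prop) : Prop :=
  inj_le {a : M & ({b : M | lt b a} -> M)} M.

Inductive sym : Type := Ge | Perp | U.

(* p : [w]^2 -> 3 is a valuation function (values of p outside [w]^2 are irrelevant). *)
Definition valuation {L : Type} (lt : L -> L -> Prop) (w : L -> Prop)
    (p : L -> L -> sym) : Prop :=
  forall i j k, w i -> w j -> w k -> lt i j -> lt j k ->
    (p i j = Ge -> p j k = Ge -> p i k = Ge) /\
    (((p i j = Perp /\ p i k = Ge) \/ (p i j = Ge /\ p i k = Perp)) -> p j k = Perp) /\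
    (p i j = Perp -> p j k = Ge -> p i k = Perp).

Definition inP {L M : Type} (ltL : L -> L -> Prop) (w : L -> Prop)
    (p : L -> L -> sym) : Prop :=
  valuation ltL w p /\ card_lt {x : L | w x} M.

Definition extends {L : Type} (ltL : L -> L -> Prop) (w : L -> Prop) (p : L -> L -> sym)
    (ws : L -> Prop) (s : L -> L -> sym) : Prop :=
  (forall i, w i -> ws i) /\
  (forall i j, w i -> w j -> ltL i j -> s i j = p i j).

(* Main.v *)
Require Import Defs.
From Stdlib Require Import Classical ClassicalEpsilon ClassicalDescription Eqdep FunctionalExtensionality ProofIrrelevance.

Definition GeW {L} (lt : L -> L -> Prop) (D : L -> Prop) (r : L -> L -> sym) i k :=
  exists d, D d /\ lt i d /\ lt d k /\ r i d = Ge /\ r d k = Ge.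
Definition PerpW {L} (lt : L -> L -> Prop) (D : L -> Prop) (r : L -> L -> sym) i k :=
  exists d, D d /\ ((lt d i /\ ((r d i = Ge /\ r d k = Perp) \/ (r d i = Perp /\ r d k = Ge)))
     \/ (lt i d /\ lt d k /\ r i d = Perp /\ r d k = Ge)).

Section G.
Variables (L : Type) (lt : L -> L -> Prop) (r : L -> L -> sym) (S : L -> Prop).
Hypothesis V : valuation lt S r.
Lemma G1 a b c : S a -> S b -> S c -> lt a b -> lt b c -> r a b = Ge -> r b c = Ge -> r a c = Ge.
Proof. intros; destruct (V a b c) as [h1 [h2 h3]]; auto. Qed.
Lemma G2a a b c : S a -> S b -> S c -> lt a b -> lt b c -> r a b = Ge -> r a c = Perp -> r b c = Perp.
Proof. intros; destruct (V a b c) as [h1 [h2 h3]]; auto. Qed.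
Lemma G2b a b c : S a -> S b -> S c -> lt a b -> lt b c -> r a b = Perp -> r a c = Ge -> r b c = Perp.
Proof. intros; destruct (V a b c) as [h1 [h2 h3]]; auto. Qed.
Lemma G3 a b c : S a -> S b -> S c -> lt a b -> lt b c -> r a b = Perp -> r b c = Ge -> r a c = Perp.
Proof. intros; destruct (V a b c) as [h1 [h2 h3]]; auto. Qed.
End G.

Section RLo.
#[local] Set Default Proof Using "All".
Section RL.
Variables (L : Type) (lt : L -> L -> Prop) (r : L -> L -> sym) (D S1 S2 : L -> Prop).
Hypothesis lt_trans : forall x y z, lt x y -> lt y z -> lt x z.
Hypothesis lt_tri : forall x y, lt x y \/ x = y \/ lt y x.
Hypothesis V1 : valuation lt S1 r.
Hypothesis V2 : valuation lt S2 r.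
Hypothesis D1 : forall x, D x -> S1 x.
Hypothesis D2 : forall x, D x -> S2 x.
Hint Resolve D1 D2 : core.

Ltac g1 V a b c := assert (r a c = Ge) by (apply (G1 _ _ _ _ V a b c); eauto).
Ltac g2a V a b c := assert (r b c = Perp) by (apply (G2a _ _ _ _ V a b c); eauto).
Ltac g2b V a b c := assert (r b c = Perp) by (apply (G2b _ _ _ _ V a b c); eauto).
Ltac g3 V a b c := assert (r a c = Perp) by (apply (G3 _ _ _ _ V a b c); eauto).
Ltac dP H e := destruct H as [e [? [[? [[? ?]|[? ?]]] | [? [? [? ?]]]]]].
Ltac dG H d := destruct H as [d [? [? [? [? ?]]]]].
Ltac tri a b := destruct (lt_tri a b) as [?|[?|?]]; [| subst; congruence |].
Ltac wl e := exists e; split; [assumption|left; split; [eauto|]].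
Ltac wr e := exists e; split; [assumption|right; split; [eauto|split;[eauto|]]].

Lemma nc i k : S1 i -> S2 k -> lt i k -> GeW lt D r i k -> PerpW lt D r i k -> False.
Proof.
  intros Hi Hk Hik HG HP. dG HG d. dP HP e.
  - g1 V1 e i d. g1 V2 e d k. congruence.
  - g3 V1 e i d. g2b V2 e d k. congruence.
  - tri d e.
    + g2a V1 i d e. g2b V2 d e k. congruence.
    + g2b V1 i e d. g2b V2 e d k. congruence.
Qed.

Section C121.
Variables i j k : L.
Hypotheses (Hi : S1 i) (Hj : S2 j) (Hk : S1 k) (Hij : lt i j) (Hjk : lt j k).
Lemma c121_1 : GeW lt D r i j -> GeW lt D r j k -> r i k = Ge.
Proof. intros H1 H2. dG H1 d1. dG H2 d2. g1 V2 d1 j d2. g1 V1 i d1 d2. g1 V1 i d2 k. auto. Qed.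
Lemma c121_2a : GeW lt D r i j -> r i k = Perp -> PerpW lt D r j k.
Proof. intros H1 H2. dG H1 d. g2a V1 i d k. wl d. auto. Qed.
Lemma c121_2b : PerpW lt D r i j -> r i k = Ge -> PerpW lt D r j k.
Proof. intros H1 H2. dP H1 e.
  - g1 V1 e i k. wl e. auto.
  - g3 V1 e i k. wl e. auto.
  - g2b V1 i e k. wl e. auto.
Qed.
Lemma c121_3 : PerpW lt D r i j -> GeW lt D r j k -> r i k = Perp.
Proof. intros H1 H2. dG H2 d2. dP H1 e.
  - g3 V2 e j d2. g2a V1 e i d2. g3 V1 i d2 k. auto.
  - g1 V2 e j d2. g2b V1 e i d2. g3 V1 i d2 k. auto.
  - g1 V2 e j d2. g3 V1 i e d2. g3 V1 i d2 k. auto.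
Qed.
End C121.

Section C122.
Variables i j k : L.
Hypotheses (Hi : S1 i) (Hj : S2 j) (Hk : S2 k) (Hij : lt i j) (Hjk : lt j k).
Lemma c122_1 : GeW lt D r i j -> r j k = Ge -> GeW lt D r i k.
Proof. intros H1 H2. dG H1 d. g1 V2 d j k. exists d; repeat split; eauto. Qed.
Lemma c122_2a : GeW lt D r i j -> PerpW lt D r i k -> r j k = Perp.
Proof. intros H1 H2. dG H1 d. dP H2 e.
  - g1 V1 e i d. g1 V2 e d j. g2a V2 e j k. auto.
  - g3 V1 e i d. g3 V2 e d j. g2b V2 e j k. auto.
  - tri d e.
    + g2a V1 i d e. tri e j.
      * g2b V2 d e j. g2b V2 e j k. auto.
      * g2a V2 d j e. g3 V2 j e k. auto.
    + g2b V1 i e d. g3 V2 e d j. g2b V2 e j k. auto.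
Qed.
Lemma c122_2b : PerpW lt D r i j -> GeW lt D r i k -> r j k = Perp.
Proof. intros H1 H2. dG H2 d. dP H1 e.
  - g1 V1 e i d. g1 V2 e d k. g2b V2 e j k. auto.
  - g3 V1 e i d. g3 V2 e d k. g2a V2 e j k. auto.
  - tri d e.
    + g2a V1 i d e. g3 V2 d e j. g2b V2 d j k. auto.
    + g2b V1 i e d. g3 V2 e d k. g2a V2 e j k. auto.
Qed.
Lemma c122_3 : PerpW lt D r i j -> r j k = Ge -> PerpW lt D r i k.
Proof. intros H1 H2. dP H1 e.
  - g3 V2 e j k. wl e. auto.
  - g1 V2 e j k. wl e. auto.
  - g1 V2 e j k. wr e. auto.
Qed.
End C122.

Section C112.
Variables i j k : L.
Hypotheses (Hi : S1 i) (Hj : S1 j) (Hk : S2 k) (Hij : lt i j) (Hjk : lt j k).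
Lemma c112_1 : r i j = Ge -> GeW lt D r j k -> GeW lt D r i k.
Proof. intros H1 H2. dG H2 d. g1 V1 i j d. exists d; repeat split; eauto. Qed.
Lemma c112_2a : r i j = Ge -> PerpW lt D r i k -> PerpW lt D r j k.
Proof. intros H1 H2. dP H2 e.
  - g1 V1 e i j. wl e. auto.
  - g3 V1 e i j. wl e. auto.
  - tri e j.
    + g2b V1 i e j. wl e. auto.
    + g2a V1 i j e. wr e. auto.
Qed.
Lemma c112_2b : r i j = Perp -> GeW lt D r i k -> PerpW lt D r j k.
Proof. intros H1 H2. dG H2 d. tri d j.
  - g2a V1 i d j. wl d. auto.
  - g2b V1 i j d. wr d. auto.
Qed.
Lemma c112_3 : r i j = Perp -> GeW lt D r j k -> PerpW lt D r i k.
Proof. intros H1 H2. dG H2 d. g3 V1 i j d. wr d. auto. Qed.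
End C112.

Section C12D.
Variables i j k : L.
Hypotheses (Hi : S1 i) (Hj : S2 j) (Hk : D k) (Hij : lt i j) (Hjk : lt j k).
Lemma c12D_1 : GeW lt D r i j -> r j k = Ge -> r i k = Ge.
Proof. intros H1 H2. dG H1 d. g1 V2 d j k. g1 V1 i d k. auto. Qed.
Lemma c12D_2a : GeW lt D r i j -> r i k = Perp -> r j k = Perp.
Proof. intros H1 H2. dG H1 d. g2a V1 i d k. g2a V2 d j k. auto. Qed.
Lemma c12D_2b : PerpW lt D r i j -> r i k = Ge -> r j k = Perp.
Proof. intros H1 H2. dP H1 e.
  - g1 V1 e i k. g2b V2 e j k. auto.
  - g3 V1 e i k. g2a V2 e j k. auto.
  - g2b V1 i e k. g2a V2 e j k. auto.
Qed.
Lemma c12D_3 : PerpW lt D r i j -> r j k = Ge -> r i k = Perp.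
Proof. intros H1 H2. dP H1 e.
  - g3 V2 e j k. g2a V1 e i k. auto.
  - g1 V2 e j k. g2b V1 e i k. auto.
  - g1 V2 e j k. g3 V1 i e k. auto.
Qed.
End C12D.

Section C1D2.
Variables i j k : L.
Hypotheses (Hi : S1 i) (Hj : D j) (Hk : S2 k) (Hij : lt i j) (Hjk : lt j k).
Lemma c1D2_1 : r i j = Ge -> r j k = Ge -> GeW lt D r i k.
Proof. intros. exists j; repeat split; auto. Qed.
Lemma c1D2_2a : r i j = Ge -> PerpW lt D r i k -> r j k = Perp.
Proof. intros H1 H2. dP H2 e.
  - g1 V1 e i j. g2a V2 e j k. auto.
  - g3 V1 e i j. g2b V2 e j k. auto.
  - tri e j.
    + g2b V1 i e j. g2b V2 e j k. auto.
    + g2a V1 i j e. g3 V2 j e k. auto.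
Qed.
Lemma c1D2_2b : r i j = Perp -> GeW lt D r i k -> r j k = Perp.
Proof. intros H1 H2. dG H2 d. tri d j.
  - g2a V1 i d j. g2b V2 d j k. auto.
  - g2b V1 i j d. g3 V2 j d k. auto.
Qed.
Lemma c1D2_3 : r i j = Perp -> r j k = Ge -> PerpW lt D r i k.
Proof. intros. wr j. auto. Qed.
End C1D2.

Section CD12.
Variables i j k : L.
Hypotheses (Hi : D i) (Hj : S1 j) (Hk : S2 k) (Hij : lt i j) (Hjk : lt j k).
Lemma cD12_1 : r i j = Ge -> GeW lt D r j k -> r i k = Ge.
Proof. intros H1 H2. dG H2 d. g1 V1 i j d. g1 V2 i d k. auto. Qed.
Lemma cD12_2a : r i j = Perp -> r i k = Ge -> PerpW lt D r j k.
Proof. intros; wl i; auto. Qed.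
Lemma cD12_2b : r i j = Ge -> r i k = Perp -> PerpW lt D r j k.
Proof. intros; wl i; auto. Qed.
Lemma cD12_3 : r i j = Perp -> GeW lt D r j k -> r i k = Perp.
Proof. intros H1 H2. dG H2 d. g3 V1 i j d. g3 V2 i d k. auto. Qed.
End CD12.
End RL.
End RLo.

Section SL.
Variables (L : Type) (lt : L -> L -> Prop) (r s : L -> L -> sym) (P Q D : L -> Prop).
Hypothesis lt_trans : forall x y z, lt x y -> lt y z -> lt x z.
Hypothesis lt_tri : forall x y, lt x y \/ x = y \/ lt y x.
Hypothesis VP : valuation lt P r.
Hypothesis VQ : valuation lt Q r.
Hypothesis HD1 : forall x, D x -> P x.
Hypothesis HD2 : forall x, D x -> Q x.
Hypothesis HD3 : forall x, P x -> Q x -> D x.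
Hypothesis sS : forall x y, lt x y -> ((P x /\ P y) \/ (Q x /\ Q y)) -> s x y = r x y.
Hypothesis sM : forall x y, lt x y -> ~((P x /\ P y) \/ (Q x /\ Q y)) ->
  (GeW lt D r x y -> s x y = Ge) /\ (~GeW lt D r x y -> PerpW lt D r x y -> s x y = Perp)
  /\ (~GeW lt D r x y -> ~PerpW lt D r x y -> s x y = U).

Lemma sGe x y : lt x y -> ~((P x /\ P y) \/ (Q x /\ Q y)) -> s x y = Ge -> GeW lt D r x y.
Proof. intros H1 H2 H3. destruct (sM x y H1 H2) as [a [b c]].
  destruct (classic (GeW lt D r x y)); auto. destruct (classic (PerpW lt D r x y)).
  - rewrite b in H3; auto; discriminate. - rewrite c in H3; auto; discriminate. Qed.
Lemma sPerp x y : lt x y -> ~((P x /\ P y) \/ (Q x /\ Q y)) -> s x y = Perp -> PerpW lt D r x y.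
Proof. intros H1 H2 H3. destruct (sM x y H1 H2) as [a [b c]].
  destruct (classic (GeW lt D r x y)). rewrite a in H3; auto; discriminate.
  destruct (classic (PerpW lt D r x y)); auto.
  rewrite c in H3; auto; discriminate. Qed.
Lemma sGe' x y : lt x y -> ~((P x /\ P y) \/ (Q x /\ Q y)) -> GeW lt D r x y -> s x y = Ge.
Proof. intros H1 H2 H3. apply (sM x y H1 H2); auto. Qed.
Lemma sPerp' x y : lt x y -> ~((P x /\ P y) \/ (Q x /\ Q y)) -> ((P x /\ Q y) \/ (Q x /\ P y)) ->
   PerpW lt D r x y -> s x y = Perp.
Proof. intros H1 H2 H4 H3. apply (sM x y H1 H2); auto. intro HG.
  destruct H4 as [[? ?]|[? ?]].
  - eapply (nc L lt r D P Q); eauto.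
  - eapply (nc L lt r D Q P); eauto.
Qed.

Ltac rw_same := repeat match goal with |- context [s ?x ?y] =>
   rewrite (sS x y ltac:(eauto) ltac:(tauto)) end.

Ltac conv := repeat match goal with
  | H : s ?x ?y = Ge |- _ => apply sGe in H; [| eauto | tauto]
  | H : s ?x ?y = Perp |- _ => apply sPerp in H; [| eauto | tauto]
  | H : _ \/ _ |- _ => destruct H as [[? ?]|[? ?]]
  end.

Ltac fin := first
  [ apply sGe'; [eauto | tauto | ]
  | apply sPerp'; [eauto | tauto | tauto | ]
  | idtac ].

Ltac app_r i j k := first [ assumption |
  solve [ eapply (c121_1 L lt r D P Q) with (i:=i) (j:=j) (k:=k); eauto ] | solve [ eapply (c121_1 L lt r D Q P) with (i:=i) (j:=j) (k:=k); eauto ] |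
  solve [ eapply (c121_2a L lt r D P Q) with (i:=i) (j:=j) (k:=k); eauto ] | solve [ eapply (c121_2a L lt r D Q P) with (i:=i) (j:=j) (k:=k); eauto ] |
  solve [ eapply (c121_2b L lt r D P Q) with (i:=i) (j:=j) (k:=k); eauto ] | solve [ eapply (c121_2b L lt r D Q P) with (i:=i) (j:=j) (k:=k); eauto ] |
  solve [ eapply (c121_3 L lt r D P Q) with (i:=i) (j:=j) (k:=k); eauto ] | solve [ eapply (c121_3 L lt r D Q P) with (i:=i) (j:=j) (k:=k); eauto ] |
  solve [ eapply (c122_1 L lt r D P Q) with (i:=i) (j:=j) (k:=k); eauto ] | solve [ eapply (c122_1 L lt r D Q P) with (i:=i) (j:=j) (k:=k); eauto ] |
  solve [ eapply (c122_2a L lt r D P Q) with (i:=i) (j:=j) (k:=k); eauto ] | solve [ eapply (c122_2a L lt r D Q P) with (i:=i) (j:=j) (k:=k); eauto ] |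
  solve [ eapply (c122_2b L lt r D P Q) with (i:=i) (j:=j) (k:=k); eauto ] | solve [ eapply (c122_2b L lt r D Q P) with (i:=i) (j:=j) (k:=k); eauto ] |
  solve [ eapply (c122_3 L lt r D P Q) with (i:=i) (j:=j) (k:=k); eauto ] | solve [ eapply (c122_3 L lt r D Q P) with (i:=i) (j:=j) (k:=k); eauto ] |
  solve [ eapply (c112_1 L lt r D P Q) with (i:=i) (j:=j) (k:=k); eauto ] | solve [ eapply (c112_1 L lt r D Q P) with (i:=i) (j:=j) (k:=k); eauto ] |
  solve [ eapply (c112_2a L lt r D P Q) with (i:=i) (j:=j) (k:=k); eauto ] | solve [ eapply (c112_2a L lt r D Q P) with (i:=i) (j:=j) (k:=k); eauto ] |
  solve [ eapply (c112_2b L lt r D P Q) with (i:=i) (j:=j) (k:=k); eauto ] | solve [ eapply (c112_2b L lt r D Q P) with (i:=i) (j:=j) (k:=k); eauto ] |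
  solve [ eapply (c112_3 L lt r D P Q) with (i:=i) (j:=j) (k:=k); eauto ] | solve [ eapply (c112_3 L lt r D Q P) with (i:=i) (j:=j) (k:=k); eauto ] |
  solve [ eapply (c12D_1 L lt r D P Q) with (i:=i) (j:=j) (k:=k); eauto ] | solve [ eapply (c12D_1 L lt r D Q P) with (i:=i) (j:=j) (k:=k); eauto ] |
  solve [ eapply (c12D_2a L lt r D P Q) with (i:=i) (j:=j) (k:=k); eauto ] | solve [ eapply (c12D_2a L lt r D Q P) with (i:=i) (j:=j) (k:=k); eauto ] |
  solve [ eapply (c12D_2b L lt r D P Q) with (i:=i) (j:=j) (k:=k); eauto ] | solve [ eapply (c12D_2b L lt r D Q P) with (i:=i) (j:=j) (k:=k); eauto ] |
  solve [ eapply (c12D_3 L lt r D P Q) with (i:=i) (j:=j) (k:=k); eauto ] | solve [ eapply (c12D_3 L lt r D Q P) with (i:=i) (j:=j) (k:=k); eauto ] |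
  solve [ eapply (c1D2_1 L lt r D P Q) with (i:=i) (j:=j) (k:=k); eauto ] | solve [ eapply (c1D2_1 L lt r D Q P) with (i:=i) (j:=j) (k:=k); eauto ] |
  solve [ eapply (c1D2_2a L lt r D P Q) with (i:=i) (j:=j) (k:=k); eauto ] | solve [ eapply (c1D2_2a L lt r D Q P) with (i:=i) (j:=j) (k:=k); eauto ] |
  solve [ eapply (c1D2_2b L lt r D P Q) with (i:=i) (j:=j) (k:=k); eauto ] | solve [ eapply (c1D2_2b L lt r D Q P) with (i:=i) (j:=j) (k:=k); eauto ] |
  solve [ eapply (c1D2_3 L lt r D P Q) with (i:=i) (j:=j) (k:=k); eauto ] | solve [ eapply (c1D2_3 L lt r D Q P) with (i:=i) (j:=j) (k:=k); eauto ] |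
  solve [ eapply (cD12_1 L lt r D P Q) with (i:=i) (j:=j) (k:=k); eauto ] | solve [ eapply (cD12_1 L lt r D Q P) with (i:=i) (j:=j) (k:=k); eauto ] |
  solve [ eapply (cD12_2a L lt r D P Q) with (i:=i) (j:=j) (k:=k); eauto ] | solve [ eapply (cD12_2a L lt r D Q P) with (i:=i) (j:=j) (k:=k); eauto ] |
  solve [ eapply (cD12_2b L lt r D P Q) with (i:=i) (j:=j) (k:=k); eauto ] | solve [ eapply (cD12_2b L lt r D Q P) with (i:=i) (j:=j) (k:=k); eauto ] |
  solve [ eapply (cD12_3 L lt r D P Q) with (i:=i) (j:=j) (k:=k); eauto ] | solve [ eapply (cD12_3 L lt r D Q P) with (i:=i) (j:=j) (k:=k); eauto ] ].

Lemma s_val : valuation lt (fun x => P x \/ Q x) s.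
Proof.
  intros i j k Hi Hj Hk Hij Hjk.
  assert (Hik : lt i k) by eauto.
  destruct (classic (P i)); destruct (classic (Q i)); try tauto;
  destruct (classic (P j)); destruct (classic (Q j)); try tauto;
  destruct (classic (P k)); destruct (classic (Q k)); try tauto;
  repeat match goal with H : P ?x, H' : Q ?x |- _ =>
     lazymatch goal with _ : D x |- _ => fail | _ => assert (D x) by auto end end;
  rw_same.
  all: try (apply VP; eauto; fail).
  all: try (apply VQ; eauto; fail).
  all: split; [|split]; intros; conv; fin; app_r i j k.
Qed.
End SL.

Section Seg.
Variables (M : Type) (ltM : M -> M -> Prop) (wf : well_founded ltM).
Hypothesis tri : forall x y : M, ltM x y \/ x = y \/ ltM y x.
Variable Z : Type.

Definition Fg (a : M) (rec : forall b, ltM b a -> option Z) : option Z :=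
  match excluded_middle_informative (exists z, forall b (h : ltM b a), rec b h <> Some z) with
  | left H => Some (proj1_sig (constructive_indefinite_description _ H))
  | right _ => None
  end.
Definition g := Fix wf (fun _ => option Z) Fg.
Lemma g_eq (a : M) : g a = Fg a (fun b _ => g b).
Proof.
  assert (Hext : forall (x : M) (f f' : forall y, ltM y x -> option Z),
     (forall y p, f y p = f' y p) -> Fg x f = Fg x f').
  { intros x f f' H.
    assert (f = f') as E.
    { apply functional_extensionality_dep; intro y; apply functional_extensionality_dep; intro p; auto. }
    subst; reflexivity. }
  exact (@Fix_eq _ _ wf (fun _ => option Z) Fg Hext a).
Qed.
Lemma g_some (a : M) (z : Z) : g a = Some z -> forall b, ltM b a -> g b <> Some z.
Proof.
  rewrite g_eq. unfold Fg. destruct excluded_middle_informative as [H|H]; [|discriminate].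
  intro E; injection E; clear E; intro E.
  destruct (constructive_indefinite_description _ H) as [z' Hz']; simpl in E; subst z'.
  intros b h; exact (Hz' b h).
Qed.
Lemma g_none (a : M) : g a = None -> forall z, exists b, ltM b a /\ g b = Some z.
Proof.
  rewrite g_eq. unfold Fg. destruct excluded_middle_informative as [H|H]; [discriminate|].
  intros _ z. apply NNPP; intro C. apply H. exists z. intros b h E. apply C. exists b; auto.
Qed.

Lemma seg_small : ~ inj_le M Z -> exists a, inj_le Z {b | ltM b a}.
Proof.
  intro NI.
  destruct (classic (exists a, g a = None)) as [[a Ha]|Hn].
  - exists a.
    assert (forall z, {b | ltM b a /\ g b = Some z}) as F.
    { intro z; apply constructive_indefinite_description; apply g_none; auto. }
    exists (fun z => exist _ (proj1_sig (F z)) (proj1 (proj2_sig (F z)))).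
    intros x y E. injection E. intro E'.
    pose proof (proj2 (proj2_sig (F x))) as Hx. pose proof (proj2 (proj2_sig (F y))) as Hy.
    rewrite E' in Hx. congruence.
  - exfalso; apply NI.
    assert (forall a, {z | g a = Some z}) as F.
    { intro a. apply constructive_indefinite_description. destruct (g a) eqn:E.
      exists z; auto. exfalso; apply Hn; eauto. }
    exists (fun a => proj1_sig (F a)).
    intros x y E. pose proof (proj2_sig (F x)) as Hx. pose proof (proj2_sig (F y)) as Hy.
    simpl in *. rewrite E in Hx.
    destruct (tri x y) as [h|[h|h]]; auto.
    + exfalso; exact (g_some y _ Hy x h Hx).
    + exfalso; exact (g_some x _ Hx y h Hy).
Qed.
End Seg.

Lemma cantor (Z : Type) : ~ inj_le (Z -> bool) Z.
Proof.
  intros [f Hf].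
  set (Dg := fun z => if excluded_middle_informative (exists phi, f phi = z /\ phi z = false) then true else false).
  destruct (Dg (f Dg)) eqn:E.
  - pose proof E as E0. unfold Dg in E at 1. destruct excluded_middle_informative as [[phi [H1 H2]]|H]; [|discriminate].
    apply Hf in H1. subst. congruence.
  - pose proof E as E0. unfold Dg in E at 1. destruct excluded_middle_informative as [H|H]; [discriminate|].
    apply H. exists Dg; auto.
Qed.

Lemma inj_comp A B C : inj_le A B -> inj_le B C -> inj_le A C.
Proof. intros [f Hf] [g Hg]. exists (fun x => g (f x)); auto. Qed.

Section Card.
Variables (M : Type) (ltM : M -> M -> Prop).
Hypothesis HM : is_cardinal ltM.
Hypothesis HMinf : is_infinite M.
Hypothesis Hpow : pow_lt_self ltM.

Lemma seg_mono a b : ltM a b -> inj_le {x | ltM x a} {x | ltM x b}.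
Proof.
  destruct HM as [[_ [tr _]] _]. intro h.
  exists (fun x => exist _ (proj1_sig x) (tr _ _ _ (proj2_sig x) h)).
  intros [x hx] [y hy] E. injection E; intro; subst. f_equal; apply proof_irrelevance.
Qed.

Lemma fun_to_M c : inj_le ((({x | ltM x c}) + {x | ltM x c}) -> bool) M.
Proof.
  destruct HMinf as [e He].
  set (code := fun b1 b2 : bool => e (if b1 then (if b2 then 3 else 2) else (if b2 then 1 else 0))).
  assert (Hc : forall a b c d, code a b = code c d -> a = c /\ b = d).
  { intros a b c' d E. apply He in E. destruct a, b, c', d; try discriminate; auto. }
  destruct Hpow as [h Hh].
  exists (fun phi => h (existT _ c (fun t => code (phi (inl t)) (phi (inr t))))).
  intros phi psi E. apply Hh in E. apply inj_pairT2 in E.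
  apply functional_extensionality; intros [t|t];
  pose proof (f_equal (fun F => F t) E) as E'; simpl in E'; apply Hc in E'; tauto.
Qed.

Lemma small_union (A : Type) (wp wq : A -> Prop) :
  card_lt {x | wp x} M -> card_lt {x | wq x} M -> card_lt {x | wp x \/ wq x} M.
Proof.
  intros [_ Hp] [_ Hq].
  destruct HM as [[irr [tr [tri wf]]] _].
  destruct (seg_small M ltM wf tri _ Hp) as [a Ha].
  destruct (seg_small M ltM wf tri _ Hq) as [b Hb].
  assert (exists c, inj_le {x | wp x} {x | ltM x c} /\ inj_le {x | wq x} {x | ltM x c}) as [c [[fa Hfa] [fb Hfb]]].
  { destruct (tri a b) as [h|[h|h]].
    - exists b; split; auto. eapply inj_comp; eauto. apply seg_mono; auto.
    - subst; eauto.
    - exists a; split; auto. eapply inj_comp; eauto. apply seg_mono; auto. }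
  set (S := {x | ltM x c}).
  assert (HU : inj_le {x | wp x \/ wq x} (S + S)).
  { exists (fun u => match excluded_middle_informative (wp (proj1_sig u)) with
       | left h => inl (fa (exist _ _ h))
       | right h => inr (fb (exist _ (proj1_sig u)
            (match proj2_sig u with or_introl a => False_ind _ (h a) | or_intror b => b end)))
       end).
    intros [x hx] [y hy]; simpl.
    destruct excluded_middle_informative; destruct excluded_middle_informative; intro E;
      try discriminate; injection E; clear E; intro E;
      [apply Hfa in E | apply Hfb in E]; injection E; intro; subst; f_equal; apply proof_irrelevance. }
  assert (HZ : inj_le (S + S) ((S + S) -> bool)).
  { exists (fun z t => if excluded_middle_informative (t = z) then true else false).
    intros x y E. pose proof (f_equal (fun F => F y) E) as E'; simpl in E'.
    do 2 destruct excluded_middle_informative; auto; try discriminate; congruence. }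
  split.
  - eapply inj_comp; [exact HU|]. eapply inj_comp; [exact HZ|]. apply fun_to_M.
  - intro HMU. apply (cantor (S + S)).
    eapply inj_comp; [apply fun_to_M|]. eapply inj_comp; eauto.
Qed.
End Card.

Theorem proposition4p4
  (L : Type) (ltL : L -> L -> Prop) (M : Type) (ltM : M -> M -> Prop)
  (HL : is_cardinal ltL) (HM : is_cardinal ltM)
  (HMinf : is_infinite M) (HML : card_lt M L)
  (Hpow : pow_lt_self ltM) (Hreg : is_regular ltL)
  (wp wq : L -> Prop) (p q : L -> L -> sym)
  (Hp : @inP L M ltL wp p) (Hq : @inP L M ltL wq q)
  (Hagree : forall i j, wp i -> wq i -> wp j -> wq j -> ltL i j -> p i j = q i j) :
  exists (ws : L -> Prop) (s : L -> L -> sym),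
    @inP L M ltL ws s /\ extends ltL wp p ws s /\ extends ltL wq q ws s.
Proof.
  destruct HL as [[irr [tr [tri wf]]] _].
  destruct Hp as [Vp Cp]. destruct Hq as [Vq Cq].
  set (r := fun i j => if excluded_middle_informative (wp i /\ wp j) then p i j else q i j).
  set (D := fun x => wp x /\ wq x).
  set (s := fun i j => if excluded_middle_informative ((wp i /\ wp j) \/ (wq i /\ wq j)) then r i j
     else if excluded_middle_informative (GeW ltL D r i j) then Ge
     else if excluded_middle_informative (PerpW ltL D r i j) then Perp else U).
  assert (rp : forall i j, wp i -> wp j -> r i j = p i j).
  { intros i j Hi Hj. unfold r. destruct excluded_middle_informative; tauto. }
  assert (rq : forall i j, wq i -> wq j -> ltL i j -> r i j = q i j).
  { intros i j Hi Hj Hij. unfold r. destruct excluded_middle_informative as [[a b]|]; auto. }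
  assert (sS : forall x y, ltL x y -> ((wp x /\ wp y) \/ (wq x /\ wq y)) -> s x y = r x y).
  { intros x y _ H. unfold s. destruct excluded_middle_informative; tauto. }
  exists (fun x => wp x \/ wq x), s.
  split; [split|split; split].
  - eapply s_val with (P := wp) (Q := wq) (D := D) (r := r); eauto.
    + intros i j k Hi Hj Hk Hij Hjk. rewrite !rp by auto. apply Vp; auto.
    + intros i j k Hi Hj Hk Hij Hjk. rewrite !rq by eauto. apply Vq; auto.
    + unfold D; tauto.
    + unfold D; tauto.
    + unfold D; tauto.
    + intros x y _ H. unfold s.
      destruct excluded_middle_informative; [tauto|].
      repeat split; intros; repeat destruct excluded_middle_informative; tauto.
  - apply small_union with (ltM := ltM); auto.
  - auto.
  - intros i j Hi Hj Hij. rewrite sS by auto. auto.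
  - auto.
  - intros i j Hi Hj Hij. rewrite sS by auto. auto.
Qed.
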